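(* Let $T$ be a complete theory and let $\varphi(\overline{x})$ be a $T$-formula having only finitely many solutions (in a model of $T$). Then $\varphi(\overline{x})$ is unary-tizable.
   Context: An expansion of a complete theory $T$ is a complete theory $T'$ in a language containing that of $T$ with $T\subseteq T'$. A $T$-formula $\varphi(\overline{x})$ is $n$-aritizable if $T$ has an expansion $T'$ such that $\varphi(\overline{x})$ is $T'$-equivalent to a Boolean combination of $T'$-formulas with $n$ free variables. Unary-tizable means $1$-aritizable. *)

(* Defs.v *)
From mathcomp Require Import all_boot.
From Stdlib Require List.
Set Implicit Arguments. Unset Strict Implicit. Unset Printing Implicit Defensive.

Record signature := Signature {
  Fsym : Type; Far : Fsym -> nat;
  Rsym : Type; Rar : Rsym -> nat }.

Section Syntax.
Variable L : signature.

Inductive term : Type :=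
| Var : nat -> term
| App : forall f : Fsym L, ('I_(Far f) -> term) -> term.

Inductive formula : Type :=
| FFalse : formula
| FEq : term -> term -> formula
| FRel : forall r : Rsym L, ('I_(Rar r) -> term) -> formula
| FNot : formula -> formula
| FAnd : formula -> formula -> formula
| FOr : formula -> formula -> formula
| FImp : formula -> formula -> formula
| FAll : nat -> formula -> formula
| FEx : nat -> formula -> formula.

Fixpoint occurs (x : nat) (t : term) : Prop :=
  match t with
  | Var y => x = y
  | App f args => exists i, occurs x (args i)
  end.

Fixpoint free (x : nat) (p : formula) : Prop :=
  match p with
  | FFalse => False
  | FEq t u => occurs x t \/ occurs x u
  | FRel r args => exists i, occurs x (args i)
  | FNot q => free x q
  | FAnd q s | FOr q s | FImp q s => free x q \/ free x s
  | FAll y q | FEx y q => x <> y /\ free x q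
  end.

Definition sentence (p : formula) : Prop := forall x, ~ free x p.

Definition at_most_free (n : nat) (p : formula) : Prop :=
  exists s : seq nat, size s <= n /\ forall x, free x p -> x \in s.

Inductive boolcomb (B : formula -> Prop) : formula -> Prop :=
| bc_base p : B p -> boolcomb B p
| bc_false : boolcomb B FFalse
| bc_not p : boolcomb B p -> boolcomb B (FNot p)
| bc_and p q : boolcomb B p -> boolcomb B q -> boolcomb B (FAnd p q)
| bc_or p q : boolcomb B p -> boolcomb B q -> boolcomb B (FOr p q)
| bc_imp p q : boolcomb B p -> boolcomb B q -> boolcomb B (FImp p q).

End Syntax.

(* Structures (with nonempty universe). *)
Record structure (L : signature) := Structure {
  carrier :> Type;
  point : carrier;
  funs : forall f : Fsym L, ('I_(Far f) -> carrier) -> carrier;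
  rels : forall r : Rsym L, ('I_(Rar r) -> carrier) -> Prop }.

Section Semantics.
Variables (L : signature) (M : structure L).

Fixpoint eval (e : nat -> M) (t : term L) : M :=
  match t with
  | Var x => e x
  | App f args => @funs L M f (fun i => eval e (args i))
  end.

Definition upd (e : nat -> M) (x : nat) (a : M) : nat -> M :=
  fun y => if y == x then a else e y.

Fixpoint sat (e : nat -> M) (p : formula L) : Prop :=
  match p with
  | FFalse => False
  | FEq t u => eval e t = eval e u
  | FRel r args => @rels L M r (fun i => eval e (args i))
  | FNot q => ~ sat e q
  | FAnd q s => sat e q /\ sat e s
  | FOr q s => sat e q \/ sat e s
  | FImp q s => sat e q -> sat e s
  | FAll x q => forall a : M, sat (upd e x a) q
  | FEx x q => exists a : M, sat (upd e x a) q
  end.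

Definition holds (p : formula L) : Prop := forall e, sat e p.

End Semantics.

Definition theory (L : signature) := formula L -> Prop.

Definition is_model (L : signature) (T : theory L) (M : structure L) : Prop :=
  forall s, T s -> holds M s.

Definition entails (L : signature) (T : theory L) (p : formula L) : Prop :=
  forall M : structure L, is_model T M -> holds M p.

Definition complete_theory (L : signature) (T : theory L) : Prop :=
  [/\ forall s, T s -> sentence s,
      exists M : structure L, is_model T M
    & forall s, sentence s -> entails T s \/ entails T (FNot s)].

Definition sig_expand (L E : signature) : signature :=
  {| Fsym := (Fsym L + Fsym E)%type;
     Far := fun s => match s with inl f => Far f | inr g => Far g end;
     Rsym := (Rsym L + Rsym E)%type;
     Rar := fun s => match s with inl r => Rar r | inr q => Rar q end |}.

Section Lift.
Variables L E : signature.

Fixpoint lift_term (t : term L) : term (sig_expand L E) :=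
  match t with
  | Var x => Var _ x
  | App f args => @App (sig_expand L E) (inl f) (fun i => lift_term (args i))
  end.

Fixpoint lift (p : formula L) : formula (sig_expand L E) :=
  match p with
  | FFalse => FFalse _
  | FEq t u => FEq (lift_term t) (lift_term u)
  | FRel r args => @FRel (sig_expand L E) (inl r) (fun i => lift_term (args i))
  | FNot q => FNot (lift q)
  | FAnd q s => FAnd (lift q) (lift s)
  | FOr q s => FOr (lift q) (lift s)
  | FImp q s => FImp (lift q) (lift s)
  | FAll x q => FAll x (lift q)
  | FEx x q => FEx x (lift q)
  end.
End Lift.

Definition expansion (L E : signature) (T : theory L) (T' : theory (sig_expand L E)) :=
  complete_theory T' /\ forall s, T s -> T' (lift E s).

Definition aritizable (n : nat) (L : signature) (T : theory L) (phi : formula L) : Prop :=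
  exists (E : signature) (T' : theory (sig_expand L E)),
    expansion T T' /\
    exists psi, boolcomb (at_most_free n) psi /\
      forall N : structure (sig_expand L E), is_model T' N ->
        forall e, @sat _ N e (lift E phi) <-> @sat _ N e psi.

Definition unary_tizable (L : signature) (T : theory L) (phi : formula L) : Prop :=
  aritizable 1 T phi.

(* Assignment induced by a k-tuple (variables >= k sent to the base point). *)
Definition env_of (L : signature) (M : structure L) (k : nat) (a : 'I_k -> M) : nat -> M :=
  fun x => match insub x with Some i => a i | None => point M end.

Definition finitely_many_solutions (L : signature) (M : structure L) (k : nat)
    (phi : formula L) : Prop :=
  exists l : list ('I_k -> M), forall a : 'I_k -> M,
    @sat _ M (env_of a) phi -> List.In a l.

(* Main.v *)
Require Import Defs.
From mathcomp Require Import all_boot.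
From Stdlib Require Import FunctionalExtensionality Classical List.
Set Implicit Arguments. Unset Strict Implicit.

Section Gen.
Variable L : signature.

Lemma eval_agree (N : structure L) (e e' : nat -> N) t :
  (forall x, occurs x t -> e x = e' x) -> @eval _ N e t = @eval _ N e' t.
Proof.
elim: t => [y|f args IH] /= H; first by apply: H.
f_equal; apply: functional_extensionality => i; apply: IH => x hx; apply: H; by exists i.
Qed.

Lemma sat_agree (N : structure L) p : forall (e e' : nat -> N),
  (forall x, free x p -> e x = e' x) -> (@sat _ N e p <-> @sat _ N e' p).
Proof.
elim: p => [|t u|r args|q IH|q IHq s IHs|q IHq s IHs|q IHq s IHs|y q IH|y q IH] e e' H /=.
- by [].
- rewrite (eval_agree (e':=e') (t:=t)); last by move=> x hx; apply: H; left.
  rewrite (eval_agree (e':=e') (t:=u)) //; by move=> x hx; apply: H; right.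
- have -> : (fun i => @eval _ N e (args i)) = (fun i => @eval _ N e' (args i)) => //.
  apply: functional_extensionality => i; apply: eval_agree => x hx; apply: H; by exists i.
- by rewrite (IH e e' H).
- have h1 := IHq e e' (fun x hx => H x (or_introl hx)).
  have h2 := IHs e e' (fun x hx => H x (or_intror hx)). tauto.
- have h1 := IHq e e' (fun x hx => H x (or_introl hx)).
  have h2 := IHs e e' (fun x hx => H x (or_intror hx)). tauto.
- have h1 := IHq e e' (fun x hx => H x (or_introl hx)).
  have h2 := IHs e e' (fun x hx => H x (or_intror hx)). tauto.
- split=> h a; [rewrite -(IH (upd e y a)) | rewrite (IH (upd e y a))]; try exact: h;
  move=> x hx; rewrite /upd; case: eqP => // /eqP nxy; apply: H; split => //; exact/eqP.
- split=> -[a h]; exists a; [rewrite -(IH (upd e y a)) | rewrite (IH (upd e y a))]; try exact: h;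
  move=> x hx; rewrite /upd; case: eqP => // /eqP nxy; apply: H; split => //; exact/eqP.
Qed.

Fixpoint closeAll (n : nat) (p : formula L) : formula L :=
  match n with 0 => p | S n => FAll n (closeAll n p) end.

Lemma closeAll_free n p x : free x (closeAll n p) -> free x p /\ n <= x.
Proof.
elim: n => [|n IH] /=; first by [].
move=> [nx /IH [h le]]; split => //; rewrite ltn_neqAle le andbT; apply/eqP => E; by apply: nx.
Qed.

Lemma closeAll_intro (N : structure L) n p :
  (forall e, @sat _ N e p) -> forall e, @sat _ N e (closeAll n p).
Proof. elim: n => [|n IH] //= H e a; exact: IH. Qed.

Lemma closeAll_elim (N : structure L) n p :
  forall e, @sat _ N e (closeAll n p) -> @sat _ N e p.
Proof.
elim: n => [|n IH] //= e H; have := IH _ (H (e n)).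
have -> // : upd e n (e n) = e.
apply: functional_extensionality => y; rewrite /upd; case: eqP => // ->; done.
Qed.
End Gen.

Section Lift.
Variables L E : signature.

Lemma occurs_lift x (t : term L) : occurs x (lift_term E t) <-> occurs x t.
Proof.
elim: t => [y|f args IH] /=; first by [].
split=> -[i h]; exists i; by apply/IH.
Qed.

Lemma free_lift x (p : formula L) : free x (Defs.lift E p) <-> free x p.
Proof.
elim: p => //=; try (intros; tauto).
- move=> t u; by rewrite !occurs_lift.
- move=> r args; split=> -[i h]; exists i; by apply/occurs_lift.
Qed.
End Lift.

Section Main.
Variables (L : signature) (M : structure L).

Definition EC : signature :=
  {| Fsym := carrier M; Far := fun _ => 0; Rsym := Empty_set; Rar := fun _ => 0 |}.

Definition L' := sig_expand L EC.

Definition M' : structure L' :=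
  {| carrier := M; point := point M;
     funs := fun s => match s as s0 return ('I_(@Far L' s0) -> M) -> M with
                      | inl f => @funs L M f | inr m => fun _ => m end;
     rels := fun s => match s as s0 return ('I_(@Rar L' s0) -> M) -> Prop with
                      | inl r => @rels L M r | inr q => fun _ => False end |}.

Lemma eval_lift e t : @eval _ M' e (lift_term EC t) = @eval _ M e t.
Proof.
elim: t => [y|f args IH] //=; f_equal; apply: functional_extensionality => i; exact: IH.
Qed.

Lemma sat_lift p : forall e, @sat _ M' e (Defs.lift EC p) <-> @sat _ M e p.
Proof.
elim: p => [|t u|r args|q IH|q IHq s IHs|q IHq s IHs|q IHq s IHs|y q IH|y q IH] e /=.
- by [].
- by rewrite !eval_lift.
- have -> // : (fun i => @eval _ M' e (lift_term EC (args i))) = (fun i => @eval _ M e (args i)).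
  apply: functional_extensionality => i; exact: eval_lift.
- by rewrite IH.
- have := IHq e; have := IHs e; tauto.
- have := IHq e; have := IHs e; tauto.
- have := IHq e; have := IHs e; tauto.
- split=> h a; [rewrite -IH | rewrite IH]; exact: h.
- split=> -[a h]; exists a; [rewrite -IH | rewrite IH]; exact: h.
Qed.

Definition cst (m : M) : term L' := @App L' (inr m) (fun _ => Var _ 0).

Fixpoint conjn (a : nat -> M) (n : nat) : formula L' :=
  match n with 0 => FNot (FFalse _)
  | S n => FAnd (conjn a n) (FEq (Var _ n) (cst (a n))) end.

Lemma conjn_sem a n e : @sat _ M' e (conjn a n) <-> forall j, j < n -> e j = a j.
Proof.
elim: n => [|n IH] /=; first by split=> // _ [].
rewrite IH; split.
- move=> [h1 h2] j; rewrite ltnS leq_eqVlt => /orP [/eqP -> //|]; exact: h1.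
- move=> h; split; last exact: h.
  move=> j lt; apply: h; exact: ltnW.
Qed.

Lemma conjn_free a n x : free x (conjn a n) -> x < n.
Proof.
elim: n => [|n IH] /=; first by [].
move=> [/IH h|[-> //|[[i hi] _] //]]; exact: ltnW.
Qed.

Lemma conjn_bc a n : boolcomb (at_most_free 1) (conjn a n).
Proof.
elim: n => [|n IH] /=; first by do 2 constructor.
apply: bc_and => //; apply: bc_base; exists [:: n]; split => // x [-> |[[i hi] _] //].
by rewrite mem_seq1.
Qed.

Variables (k : nat) (phi : formula L).

Lemma list_psi (l : list ('I_k -> M)) : exists psi,
  [/\ boolcomb (at_most_free 1) psi, (forall x, free x psi -> x < k) &
   forall e, @sat _ M' e psi <-> exists a, [/\ List.In a l, @sat _ M (env_of a) phi &
                                  forall j, j < k -> e j = env_of a j]].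
Proof.
elim: l => [|a l [psi [bc fr sem]]].
- exists (FFalse _); split => //; first by constructor.
  by move=> e; split=> // -[a []].
- case: (classic (@sat _ M (env_of a) phi)) => ha.
  + exists (FOr (conjn (env_of a) k) psi); split.
    * by apply: bc_or => //; apply: conjn_bc.
    * by move=> x /= [/conjn_free|/fr].
    * move=> e /=; rewrite conjn_sem sem; split.
      - move=> [h|[b [h1 h2 h3]]]; first by exists a; split => //; left.
        by exists b; split => //; right.
      - move=> [b [[<-|h1] h2 h3]]; first by left.
        by right; exists b.
  + exists psi; split => // e; rewrite sem; split.
    * move=> [b [h1 h2 h3]]; by exists b; split => //; right.
    * move=> [b [[E|h1] h2 h3]]; first by subst b.
      by exists b.
Qed.
End Main.

Theorem proposition2p5 (L : signature) (T : theory L) (k : nat) (phi : formula L) :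
  complete_theory T ->
  (forall x, free x phi -> x < k) ->
  (exists M : structure L, is_model T M /\ finitely_many_solutions M k phi) ->
  unary_tizable T phi.
Proof.
move=> [Tsent _ _] Hfree [M [HM [l Hl]]].
have [psi [bc fr sem]] := list_psi phi l.
have key : forall e, @sat _ M e phi <-> @sat _ (M' M) e psi.
  move=> e; rewrite sem; split.
  - move=> he; set a := fun i : 'I_k => e i.
    have env : forall j, j < k -> env_of a j = e j.
      by move=> j lt; rewrite /env_of insubT.
    have ha : @sat _ M (env_of a) phi.
      by rewrite (sat_agree (e' := e)) // => x hx; exact: env (Hfree _ hx).
    exists a; split => //; [exact: Hl | by move=> j hj; rewrite env].
  - move=> [b [_ h2 h3]]; rewrite (sat_agree (e' := env_of b)) // => x /Hfree; exact: h3.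
pose T' := fun s : formula (L' M) => sentence s /\ holds (M' M) s.
exists (EC M), T'; split.
  split.
  - split.
    + by move=> s [].
    + by exists (M' M) => s [].
    + move=> s ss; case: (classic (holds (M' M) s)) => h.
      * by left => N HN; apply: HN.
      * right => N HN; apply: HN; split; first by move=> x /=; exact: ss.
        move=> e /= hs; apply: h => e'.
        by rewrite (sat_agree (e' := e)) // => x /ss.
  - move=> s Ts; split.
    + by move=> x /free_lift; apply: Tsent.
    + by move=> e; rewrite sat_lift; apply: HM.
exists psi; split => // N HN e.
pose chi := FAnd (FImp (Defs.lift (EC M) phi) psi) (FImp psi (Defs.lift (EC M) phi)).
have Hs : T' (closeAll k chi).
  split.
  - move=> x /closeAll_free [h le].
    have lt : x < k.
      case: h => -[h|h]; first [exact: fr h | exact: Hfree _ (proj1 (free_lift _ _ _) h)].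
    by move: le; rewrite leqNgt lt.
  - apply: closeAll_intro => e' /=; rewrite sat_lift key; tauto.
have := closeAll_elim (HN _ Hs e) => /=; tauto.
Qed.
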